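(* Let $T$ be an anonymous, non-counterfactual, reasonable tail test. If $T\not\sim\mathcal{D}$, then for every $0<\epsilon<1$ there exists a pair $\hat f=(\hat f_0,\hat f_1)\in F\times F$ such that $$P_0^{\hat f}(\{T(\cdot,\hat f)=1\})>1-\epsilon\quad\text{or}\quad P_1^{\hat f}(\{T(\cdot,\hat f)=0\})>1-\epsilon.$$
   Context: Let $\Omega=\{0,1\}$ and let $\Omega^\infty$ be the set of infinite sequences $\omega=(\omega_1,\omega_2,\dots)$; $\omega^t=(\omega_1,\dots,\omega_t)$ denotes the prefix and also the cylinder set $\{\hat\omega:\hat\omega^t=\omega^t\}$; $\Omega^\infty$ carries the $\sigma$-algebra generated by cylinders. $\Delta(\Omega)$ is the set of probability distributions on $\Omega$. A forecasting strategy is a function $f:\bigcup_{t\ge 0}(\Omega\times\Delta(\Omega)\times\Delta(\Omega))^t\to\Delta(\Omega)$; $F$ is the set of all forecasting strategies. For $f=(f_0,f_1)$ and $\omega$, the play path $h=h(\omega,f_0,f_1)\in(\Omega\times\Delta(\Omega)\times\Delta(\Omega))^\infty$ is defined by $h^0=\emptyset$, $h^t=(h^{t-1},(\omega_t,f_0(h^{t-1}),f_1(h^{t-1})))$; $h^n$ is its prefix of length $n$ and $h_n$ its suffix of coordinates indexed by $t\ge n$. The induced measures satisfy $P_i^f(\omega^t)=\prod_{n=1}^t f_i(h^{n-1})[\omega_n]$. A comparison test is a function $T:\Omega^\infty\times F\times F\to\{0,\tfrac12,1\}$, measurable in $\omega$ for each fixed pair; $\{T(\cdot,f)=k\}=\{\omega:T(\omega,f_0,f_1)=k\}$.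 $T$ is anonymous if $T(\omega,f_0,f_1)=1-T(\omega,f_1,f_0)$ always. $T$ is non-counterfactual if there is $\hat T$ on $(\Omega\times\Delta(\Omega)\times\Delta(\Omega))^\infty$ with $T(\omega,f_0,f_1)=\hat T(h(\omega,f_0,f_1))$. $T$ is reasonable if for all $f$, $i\in\{0,1\}$ and measurable $A$: $P_i^f(A)>0$ and $P_{1-i}^f(A)=0$ imply $P_i^f(A\cap\{T(\cdot,f)=i\})>0$. Two triplets $(\omega,f_0,f_1),(\tilde\omega,\tilde f_0,\tilde f_1)$ eventually coincide if there exists $n>1$ such that $h_n(\omega,f_0,f_1)=h_n(\tilde\omega,\tilde f_0,\tilde f_1)$ and for all $1\le t\le n-1$, $i\in\{0,1\}$: $f_i(h^{t-1}(\omega,f_0,f_1))[\omega_t]>0$ and $\tilde f_i(h^{t-1}(\tilde\omega,\tilde f_0,\tilde f_1))[\tilde\omega_t]>0$. $T$ is a tail test if it takes equal values on any two triplets that eventually coincide. $T\sim\hat T$ means: for every pair $f$ and $i\in\{0,1\}$, $P_i^f(\{\omega:T(\omega,f_0,f_1)\ne\hat T(\omega,f_0,f_1)\})=0$. Likelihood ratios along $h=h(\omega,f_0,f_1)$: $D^t_{f_0}f_1(\omega)=\prod_{n=1}^t \frac{f_1(h^{n-1})[\omega_n]}{f_0(h^{n-1})[\omega_n]}$, $D^t_{f_1}f_0(\omega)=\prod_{n=1}^t \frac{f_0(h^{n-1})[\omega_n]}{f_1(h^{n-1})[\omega_n]}$. For $(j,k)\in\{(0,1),(1,0)\}$, $\overline{D}_{f_j}f_k=\limsup_t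 D^t_{f_j}f_k$, $\underline{D}_{f_j}f_k=\liminf_t D^t_{f_j}f_k$ if $f_j(h^{n-1})[\omega_n]>0$ for all $n$, and both $=+\infty$ otherwise; if they coincide and are finite the common value is the derivative $D_{f_j}f_k(\omega)$. The derivative test: $\mathcal{D}(\omega,f_0,f_1)=1$ if $D_{f_1}f_0(\omega)$ exists and equals $0$; $=0$ if $D_{f_0}f_1(\omega)$ exists and equals $0$; $=\tfrac12$ otherwise. *)

(* Defs.v *)
From Stdlib Require Import Reals List ClassicalEpsilon.
Open Scope R_scope.

(* Delta(Omega), Omega = {0,1} = bool: a distribution is the probability of outcome 1 *)
Definition Dist : Type := {p : R | 0 <= p <= 1}.
Definition dprob (d : Dist) (b : bool) : R :=
  if b then proj1_sig d else 1 - proj1_sig d.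

Definition Entry : Type := (bool * Dist * Dist)%type.
(* forecasting strategy: finite histories (oldest first) -> distribution *)
Definition Strategy : Type := list Entry -> Dist.
(* infinite sequence; w k is omega_{k+1} *)
Definition Seq : Type := nat -> bool.

Fixpoint hist (f0 f1 : Strategy) (w : Seq) (t : nat) : list Entry :=
  match t with
  | O => nil
  | S t' => hist f0 f1 w t' ++
            ((w t', f0 (hist f0 f1 w t'), f1 (hist f0 f1 w t')) :: nil)
  end.

(* coordinate k of the play path h (the coordinate indexed by t = k+1) *)
Definition path (f0 f1 : Strategy) (w : Seq) (k : nat) : Entry :=
  (w k, f0 (hist f0 f1 w k), f1 (hist f0 f1 w k)).

(* forecaster i (false = 0, true = 1) *)
Definition strat (i : bool) (f0 f1 : Strategy) : Strategy := if i then f1 else f0.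

Definition fprob (f0 f1 : Strategy) (i : bool) (w : Seq) (k : nat) : R :=
  dprob (strat i f0 f1 (hist f0 f1 w k)) (w k).

Definition cyl (v : Seq) (t : nat) : Seq -> Prop :=
  fun w => forall k, (k < t)%nat -> w k = v k.

Fixpoint cylmass (f0 f1 : Strategy) (i : bool) (v : Seq) (t : nat) : R :=
  match t with
  | O => 1
  | S t' => cylmass f0 f1 i v t' * fprob f0 f1 i v t'
  end.

Inductive measurable : (Seq -> Prop) -> Prop :=
  | meas_cyl : forall v t, measurable (cyl v t)
  | meas_compl : forall A, measurable A -> measurable (fun w => ~ A w)
  | meas_union : forall (A : nat -> Seq -> Prop),
      (forall n, measurable (A n)) -> measurable (fun w => exists n, A n w)
  | meas_ext : forall A B, measurable A -> (forall w, A w <-> B w) -> measurable B.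

(* countable covers by cylinders (None = empty piece) *)
Definition Cover : Type := nat -> option (Seq * nat).
Definition cover_piece (c : Cover) (n : nat) (w : Seq) : Prop :=
  match c n with None => False | Some (v, t) => cyl v t w end.
Definition cover_mass (f0 f1 : Strategy) (i : bool) (c : Cover) (n : nat) : R :=
  match c n with None => 0 | Some (v, t) => cylmass f0 f1 i v t end.

Definition cover_value (f0 f1 : Strategy) (i : bool) (A : Seq -> Prop) (r : R) : Prop :=
  exists c : Cover,
    (forall w, A w -> exists n, cover_piece c n w) /\
    infinite_sum (cover_mass f0 f1 i c) r.

Definition is_inf (S : R -> Prop) (r : R) : Prop :=
  (forall x, S x -> r <= x) /\ (forall y, (forall x, S x -> y <= x) -> y <= r).

(* P_i^f(A): outer measure generated by the cylinder masses; on measurable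
   sets this is the unique (Caratheodory) extension of the cylinder measure. *)
Definition Pm (f0 f1 : Strategy) (i : bool) (A : Seq -> Prop) : R :=
  epsilon (inhabits 0) (fun r => is_inf (cover_value f0 f1 i A) r).

Inductive Verdict : Type := V0 | Vhalf | V1.
Definition vflip (v : Verdict) : Verdict :=
  match v with V0 => V1 | Vhalf => Vhalf | V1 => V0 end.
Definition vof (i : bool) : Verdict := if i then V1 else V0.

Definition Test : Type := Seq -> Strategy -> Strategy -> Verdict.

Definition test_measurable (T : Test) : Prop :=
  forall f0 f1 k, measurable (fun w => T w f0 f1 = k).

Definition anonymous (T : Test) : Prop :=
  forall w f0 f1, T w f0 f1 = vflip (T w f1 f0).

Definition non_counterfactual (T : Test) : Prop :=
  exists Th : (nat -> Entry) -> Verdict,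
    forall w f0 f1, T w f0 f1 = Th (path f0 f1 w).

Definition reasonable (T : Test) : Prop :=
  forall f0 f1 (i : bool) (A : Seq -> Prop), measurable A ->
    Pm f0 f1 i A > 0 -> Pm f0 f1 (negb i) A = 0 ->
    Pm f0 f1 i (fun w => A w /\ T w f0 f1 = vof i) > 0.

(* eventually coincide; 0-based: suffix from index n-1, positivity at indices < n-1 *)
Definition ev_coincide (w : Seq) (f0 f1 : Strategy) (w' : Seq) (g0 g1 : Strategy) : Prop :=
  exists n : nat, (n > 1)%nat /\
    (forall k, (n - 1 <= k)%nat -> path f0 f1 w k = path g0 g1 w' k) /\
    (forall t (i : bool), (t < n - 1)%nat ->
        fprob f0 f1 i w t > 0 /\ fprob g0 g1 i w' t > 0).

Definition tail_test (T : Test) : Prop :=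
  forall w f0 f1 w' g0 g1, ev_coincide w f0 f1 w' g0 g1 -> T w f0 f1 = T w' g0 g1.

Fixpoint Dt (f0 f1 : Strategy) (j : bool) (w : Seq) (t : nat) : R :=
  match t with
  | O => 1
  | S t' => Dt f0 f1 j w t' * (fprob f0 f1 (negb j) w t' / fprob f0 f1 j w t')
  end.

Definition Dzero (f0 f1 : Strategy) (j : bool) (w : Seq) : Prop :=
  (forall n, fprob f0 f1 j w n > 0) /\ Un_cv (Dt f0 f1 j w) 0.

Definition Dtest : Test := fun w f0 f1 =>
  if excluded_middle_informative (Dzero f0 f1 true w) then V1
  else if excluded_middle_informative (Dzero f0 f1 false w) then V0
  else Vhalf.

Definition test_equiv (T T' : Test) : Prop :=
  forall f0 f1 (i : bool), Pm f0 f1 i (fun w => T w f0 f1 <> T' w f0 f1) = 0.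

(* Main.v *)
Require Import Defs.
From Stdlib Require Import Reals List ClassicalEpsilon Lra Lia Classical Cantor.
Open Scope R_scope.
Import ListNotations.

Lemma dprob_range d b : 0 <= dprob d b <= 1.
Proof. destruct d as [p Hp]; destruct b; simpl; lra. Qed.

Lemma dprob_sum d : dprob d false + dprob d true = 1.
Proof. destruct d as [p Hp]; simpl; lra. Qed.

Lemma hist_length f0 f1 w n : length (hist f0 f1 w n) = n.
Proof. induction n; simpl; auto. rewrite length_app, IHn; simpl; lia. Qed.

Lemma hist_ext f0 f1 w w' n : (forall k, (k < n)%nat -> w k = w' k) ->
  hist f0 f1 w n = hist f0 f1 w' n.
Proof.
  induction n; intros H; simpl; auto.
  rewrite IHn by (intros; apply H; lia). rewrite (H n) by lia. reflexivity.
Qed.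

Lemma fprob_ext f0 f1 i w w' n : (forall k, (k <= n)%nat -> w k = w' k) ->
  fprob f0 f1 i w n = fprob f0 f1 i w' n.
Proof.
  intros H; unfold fprob. rewrite (hist_ext f0 f1 w w' n) by (intros; apply H; lia).
  rewrite (H n) by lia; reflexivity.
Qed.

Lemma cylmass_ext f0 f1 i w w' n : (forall k, (k < n)%nat -> w k = w' k) ->
  cylmass f0 f1 i w n = cylmass f0 f1 i w' n.
Proof.
  induction n; intros H; simpl; auto.
  rewrite IHn by (intros; apply H; lia).
  rewrite (fprob_ext f0 f1 i w w' n) by (intros; apply H; lia). reflexivity.
Qed.

Lemma Dt_ext f0 f1 j w w' n : (forall k, (k < n)%nat -> w k = w' k) ->
  Dt f0 f1 j w n = Dt f0 f1 j w' n.
Proof.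
  induction n; intros H; simpl; auto.
  rewrite IHn by (intros; apply H; lia).
  rewrite (fprob_ext f0 f1 j w w' n) by (intros; apply H; lia).
  rewrite (fprob_ext f0 f1 (negb j) w w' n) by (intros; apply H; lia). reflexivity.
Qed.

Lemma fprob_range f0 f1 i w n : 0 <= fprob f0 f1 i w n <= 1.
Proof. apply dprob_range. Qed.

Lemma cylmass_range f0 f1 i w n : 0 <= cylmass f0 f1 i w n <= 1.
Proof.
  induction n; simpl; [lra|]. pose proof (fprob_range f0 f1 i w n).
  split; [apply Rmult_le_pos; lra|].
  replace 1 with (1*1) by ring. apply Rmult_le_compat; lra.
Qed.

Lemma cylmass_pos_fprob f0 f1 i w n k : cylmass f0 f1 i w n > 0 -> (k < n)%nat ->
  fprob f0 f1 i w k > 0.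
Proof.
  induction n; intros H Hk; [lia|]. simpl in H.
  pose proof (cylmass_range f0 f1 i w n). pose proof (fprob_range f0 f1 i w n).
  assert (cylmass f0 f1 i w n > 0 /\ fprob f0 f1 i w n > 0).
  { split; destruct (Req_dec (cylmass f0 f1 i w n) 0) as [E|E];
    try (rewrite E in H; lra); destruct (Req_dec (fprob f0 f1 i w n) 0) as [E'|E'];
    try (rewrite E' in H; lra); lra. }
  destruct (Nat.eq_dec k n); [subst; tauto|]. apply IHn; [tauto|lia].
Qed.

Lemma cylmass_pos_of f0 f1 i w n : (forall k, (k < n)%nat -> fprob f0 f1 i w k > 0) ->
  cylmass f0 f1 i w n > 0.
Proof.
  induction n; intros H; simpl; [lra|]. apply Rmult_lt_0_compat.
  apply IHn; intros; apply H; lia. apply H; lia.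
Qed.

Definition sol (u : list bool) : Seq := fun k => nth k u false.
Definition pre (w : Seq) (n : nat) : list bool := map w (seq 0 n).

Lemma pre_length w n : length (pre w n) = n.
Proof. unfold pre; rewrite length_map, length_seq; auto. Qed.

Lemma pre_nth w n k : (k < n)%nat -> sol (pre w n) k = w k.
Proof.
  intros Hk; unfold sol, pre.
  rewrite nth_indep with (d' := w 0%nat) by (rewrite length_map, length_seq; auto).
  rewrite map_nth, seq_nth by auto. reflexivity.
Qed.

Lemma pre_eq w w' n : pre w n = pre w' n <-> (forall k, (k < n)%nat -> w k = w' k).
Proof.
  split.
  - intros H k Hk. rewrite <- (pre_nth w n k Hk), <- (pre_nth w' n k Hk), H; auto.
  - intros H; unfold pre; apply map_ext_in; intros a Ha; apply in_seq in Ha; apply H; lia.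
Qed.

Lemma pre_sol u : pre (sol u) (length u) = u.
Proof.
  apply nth_ext with (d := false) (d' := false). rewrite pre_length; auto.
  intros n Hn. rewrite pre_length in Hn. change (sol (pre (sol u) (length u)) n = sol u n).
  apply pre_nth; auto.
Qed.

Lemma cyl_pre v t w : cyl v t w <-> pre w t = pre v t.
Proof. unfold cyl; rewrite pre_eq; tauto. Qed.

Fixpoint bits (p : positive) : list bool :=
  match p with xH => nil | xO q => false :: bits q | xI q => true :: bits q end.
Fixpoint unbits (l : list bool) : positive :=
  match l with nil => xH | false :: l => xO (unbits l) | true :: l => xI (unbits l) end.
Lemma bits_unbits l : bits (unbits l) = l.
Proof. induction l as [|[] l IH]; simpl; congruence. Qed.
Lemma unbits_bits p : unbits (bits p) = p.
Proof. induction p; simpl; congruence. Qed.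

Definition str (k : nat) : list bool := bits (Pos.of_succ_nat k).
Lemma str_inj k k' : str k = str k' -> k = k'.
Proof.
  unfold str; intros H. apply SuccNat2Pos.inj.
  rewrite <- (unbits_bits (Pos.of_succ_nat k)), H, unbits_bits; auto.
Qed.
Lemma str_surj l : exists k, str k = l.
Proof.
  destruct (Pos2Nat.is_succ (unbits l)) as [n Hn]. exists n. unfold str.
  rewrite (SuccNat2Pos.inv n (unbits l) Hn). apply bits_unbits.
Qed.
Lemma cv_const c : Un_cv (fun _ => c) c.
Proof. intros e He; exists 0%nat; intros; unfold Rdist; rewrite Rminus_diag, Rabs_R0; lra. Qed.

Lemma cv_le_const u l c : Un_cv u l -> (forall n, u n <= c) -> l <= c.
Proof. intros H1 H2. apply (Rle_cv_lim H2 H1 (cv_const c)). Qed.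

Lemma cv_ge_const u l c : Un_cv u l -> (forall n, c <= u n) -> c <= l.
Proof. intros H1 H2. apply (Rle_cv_lim H2 (cv_const c) H1). Qed.

Lemma sum_nonneg a N : (forall n, 0 <= a n) -> 0 <= sum_f_R0 a N.
Proof. intros H; induction N; simpl; [apply H|]. pose proof (H (S N)); lra. Qed.

Lemma series_nonneg a r : (forall n, 0 <= a n) -> infinite_sum a r -> 0 <= r.
Proof. intros H1 H2. apply (cv_ge_const _ _ 0 H2). intros; apply sum_nonneg; auto. Qed.

Lemma partial_le a r N : (forall n, 0 <= a n) -> infinite_sum a r -> sum_f_R0 a N <= r.
Proof. intros H1 H2. apply sum_incr; auto. Qed.

Lemma sum_zero a N : (forall n, a n = 0) -> sum_f_R0 a N = 0.
Proof. intros H; induction N; simpl; rewrite H; [auto|rewrite IHN; ring]. Qed.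

Lemma sum_first a x N : a 0%nat = x -> (forall n, (n > 0)%nat -> a n = 0) -> sum_f_R0 a N = x.
Proof. intros H0 H; induction N; simpl; auto. rewrite IHN, H by lia; ring. Qed.

Lemma mono_bound a B : (forall n, 0 <= a n) -> (forall N, sum_f_R0 a N <= B) ->
  exists r, infinite_sum a r /\ r <= B.
Proof.
  intros H1 H2.
  assert (G : Un_growing (sum_f_R0 a)).
  { intros n; simpl; pose proof (H1 (S n)); lra. }
  assert (U : has_ub (sum_f_R0 a)). { exists B; intros x [i ->]; auto. }
  destruct (growing_cv _ G U) as [l Hl]. exists l; split; auto.
  apply (cv_le_const _ _ _ Hl H2).
Qed.

Lemma cover_mass_nonneg f0 f1 i c n : 0 <= cover_mass f0 f1 i c n.
Proof. unfold cover_mass; destruct (c n) as [[v t]|]; [apply cylmass_range|lra]. Qed.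

Lemma cover_value_nonneg f0 f1 i A r : cover_value f0 f1 i A r -> 0 <= r.
Proof. intros [c [_ H]]. eapply series_nonneg; [|eauto]. intros; apply cover_mass_nonneg. Qed.

Lemma cover_value_exists f0 f1 i A : exists r, cover_value f0 f1 i A r.
Proof.
  exists 1. exists (fun n => match n with O => Some (fun _ => false, 0%nat) | _ => None end).
  split.
  - intros w _; exists 0%nat; simpl. intros k Hk; lia.
  - intros e He; exists 0%nat; intros n _. unfold Rdist.
    rewrite (sum_first _ 1). rewrite Rminus_diag, Rabs_R0; lra.
    reflexivity. intros [|m] Hm; [lia|reflexivity].
Qed.

Lemma inf_exists f0 f1 i A : exists r, is_inf (cover_value f0 f1 i A) r.
Proof.
  set (E := fun y => cover_value f0 f1 i A (- y)).
  assert (Hb : bound E). { exists 0; intros y Hy. apply cover_value_nonneg in Hy; lra. }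
  assert (He : exists x, E x).
  { destruct (cover_value_exists f0 f1 i A) as [r Hr]. exists (-r); unfold E; rewrite Ropp_involutive; auto. }
  destruct (completeness E Hb He) as [m [Hm1 Hm2]].
  exists (-m); split.
  - intros x Hx. assert (E (-x)) by (unfold E; rewrite Ropp_involutive; auto).
    specialize (Hm1 _ H); lra.
  - intros y Hy. assert (m <= -y). { apply Hm2. intros z Hz. specialize (Hy _ Hz); lra. } lra.
Qed.

Lemma Pm_spec f0 f1 i A : is_inf (cover_value f0 f1 i A) (Pm f0 f1 i A).
Proof.
  unfold Pm. apply epsilon_spec. apply inf_exists.
Qed.

Lemma Pm_le_cover f0 f1 i A r : cover_value f0 f1 i A r -> Pm f0 f1 i A <= r.
Proof. intros H; apply (proj1 (Pm_spec f0 f1 i A)); auto. Qed.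

Lemma Pm_ge f0 f1 i A y : (forall r, cover_value f0 f1 i A r -> y <= r) -> y <= Pm f0 f1 i A.
Proof. intros H; apply (proj2 (Pm_spec f0 f1 i A)); auto. Qed.

Lemma Pm_nonneg f0 f1 i A : 0 <= Pm f0 f1 i A.
Proof. apply Pm_ge; intros; eapply cover_value_nonneg; eauto. Qed.

Lemma Pm_approx f0 f1 i A e : e > 0 -> exists r, cover_value f0 f1 i A r /\ r < Pm f0 f1 i A + e.
Proof.
  intros He. apply NNPP; intros N.
  assert (Pm f0 f1 i A + e <= Pm f0 f1 i A).
  { apply Pm_ge. intros r Hr. apply Rnot_lt_le. intros Hlt. apply N; exists r; auto. }
  lra.
Qed.

Lemma Pm_mono f0 f1 i (A B : Seq -> Prop) : (forall w, A w -> B w) ->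
  Pm f0 f1 i A <= Pm f0 f1 i B.
Proof.
  intros H. apply Pm_ge. intros r [c [Hc Hs]]. apply Pm_le_cover. exists c; split; auto.
Qed.

Lemma Pm_empty f0 f1 i (A : Seq -> Prop) : (forall w, ~ A w) -> Pm f0 f1 i A = 0.
Proof.
  intros H. apply Rle_antisym; [|apply Pm_nonneg]. apply Pm_le_cover.
  exists (fun _ => None); split. intros w Hw; exfalso; apply (H w Hw).
  intros e He; exists 0%nat; intros n _. unfold Rdist.
  rewrite sum_zero by (intros; unfold cover_mass; simpl; auto). rewrite Rminus_diag, Rabs_R0; lra.
Qed.

Lemma Pm_pos_ex f0 f1 i (A : Seq -> Prop) : Pm f0 f1 i A > 0 -> exists w, A w.
Proof.
  intros H. apply NNPP; intros N. rewrite Pm_empty in H. lra.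
  intros w Hw; apply N; exists w; auto.
Qed.

Lemma Pm_cyl f0 f1 i (A : Seq -> Prop) v t : (forall w, A w -> cyl v t w) ->
  Pm f0 f1 i A <= cylmass f0 f1 i v t.
Proof.
  intros H. apply Pm_le_cover.
  exists (fun n => match n with O => Some (v, t) | _ => None end). split.
  - intros w Hw; exists 0%nat; unfold cover_piece; simpl; auto.
  - intros e He; exists 0%nat; intros n _. unfold Rdist.
    rewrite (sum_first _ (cylmass f0 f1 i v t)). rewrite Rminus_diag, Rabs_R0; lra.
    reflexivity. intros [|m] Hm; [lia|reflexivity].
Qed.

Definition lsum {X : Type} (g : X -> R) (l : list X) : R :=
  fold_right (fun x acc => g x + acc) 0 l.

Lemma lsum_app {X} (g : X -> R) l1 l2 : lsum g (l1 ++ l2) = lsum g l1 + lsum g l2.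
Proof. induction l1; simpl; [ring|rewrite IHl1; ring]. Qed.

Lemma lsum_nonneg {X} (g : X -> R) l : (forall x, 0 <= g x) -> 0 <= lsum g l.
Proof. intros H; induction l; simpl; [lra|]. pose proof (H a); lra. Qed.

Lemma lsum_le {X} (g h : X -> R) l : (forall x, In x l -> g x <= h x) -> lsum g l <= lsum h l.
Proof.
  induction l; simpl; intros H; [lra|].
  pose proof (H a (or_introl eq_refl)). assert (lsum g l <= lsum h l) by (apply IHl; auto). lra.
Qed.

Lemma lsum_plus {X} (g h : X -> R) l : lsum (fun x => g x + h x) l = lsum g l + lsum h l.
Proof. induction l; simpl; [ring|rewrite IHl; ring]. Qed.

Lemma lsum_scal {X} (g : X -> R) c l : lsum (fun x => c * g x) l = c * lsum g l.
Proof. induction l; simpl; [ring|rewrite IHl; ring]. Qed.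

Lemma lsum_map {X Y} (g : Y -> R) (f : X -> Y) l : lsum g (map f l) = lsum (fun x => g (f x)) l.
Proof. induction l; simpl; congruence. Qed.

Lemma lsum_flat_map {X Y} (g : Y -> R) (f : X -> list Y) l :
  lsum g (flat_map f l) = lsum (fun x => lsum g (f x)) l.
Proof. induction l; simpl; auto. rewrite lsum_app, IHl; auto. Qed.

Lemma sum_lsum a N : sum_f_R0 a N = lsum a (seq 0 (S N)).
Proof.
  induction N; [simpl; ring|]. change (sum_f_R0 a (S N)) with (sum_f_R0 a N + a (S N)).
  rewrite IHN, (seq_S (S N) 0), lsum_app. simpl. ring.
Qed.

Section Sub.
Context {X : Type} (dec : forall x y : X, {x = y} + {x <> y}).

Lemma lsum_remove_le (g : X -> R) a L : (forall x, 0 <= g x) -> lsum g (remove dec a L) <= lsum g L.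
Proof.
  intros H; induction L; simpl; [lra|]. destruct (dec a a0); simpl; pose proof (H a0); lra.
Qed.

Lemma lsum_remove_in (g : X -> R) a L : (forall x, 0 <= g x) -> In a L ->
  g a + lsum g (remove dec a L) <= lsum g L.
Proof.
  intros H; induction L; simpl; [tauto|]. intros [E|I].
  - subst. destruct (dec a a); [|congruence]. pose proof (lsum_remove_le g a L H). lra.
  - destruct (dec a a0); simpl.
    + subst. pose proof (lsum_remove_le g a0 L H). pose proof (H a0); lra.
    + specialize (IHL I). lra.
Qed.

Lemma lsum_sub (g : X -> R) l L : (forall x, 0 <= g x) -> NoDup l -> incl l L ->
  lsum g l <= lsum g L.
Proof.
  intros H; revert L; induction l; intros L N I; simpl.
  - apply lsum_nonneg; auto.
  - inversion N; subst. assert (In a L) by (apply I; simpl; auto).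
    assert (lsum g l <= lsum g (remove dec a L)).
    { apply IHl; auto. intros x Hx. apply in_in_remove. intros ->; tauto. apply I; simpl; auto. }
    pose proof (lsum_remove_in g a L H H0). lra.
Qed.
End Sub.

Lemma pair_dec : forall x y : (nat * nat)%type, {x = y} + {x <> y}.
Proof. decide equality; apply Nat.eq_dec. Qed.

Lemma of_nat_bound k : (fst (of_nat k) <= k /\ snd (of_nat k) <= k)%nat.
Proof.
  pose proof (to_nat_non_decreasing (fst (of_nat k)) (snd (of_nat k))).
  rewrite <- surjective_pairing, cancel_to_of in H. lia.
Qed.

Lemma geom_sum d N : sum_f_R0 (fun n => d * (/2) ^ (S n)) N = d - d * (/2) ^ (S N).
Proof. induction N; simpl; [field|]. simpl in IHN. rewrite IHN. field. Qed.

Lemma Pm_csub f0 f1 i (A : nat -> Seq -> Prop) (b : nat -> R) B :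
  (forall n, Pm f0 f1 i (A n) <= b n) -> (forall N, sum_f_R0 b N <= B) ->
  Pm f0 f1 i (fun w => exists n, A n w) <= B.
Proof.
  intros Hb HB.
  assert (Hd : forall d, d > 0 -> Pm f0 f1 i (fun w => exists n, A n w) <= B + d).
  2:{ apply Rnot_lt_le; intros Hlt. set (P := Pm f0 f1 i _) in *.
      specialize (Hd ((P - B)/2) ltac:(lra)). lra. }
  intros d Hd.
  set (e := fun n : nat => d * (/2) ^ (S n)).
  assert (He : forall n, e n > 0). { intros n; unfold e. apply Rmult_lt_0_compat; auto. apply pow_lt; lra. }
  set (Pn := fun n (c : Cover) => (forall w, A n w -> exists m, cover_piece c m w) /\
        exists r, infinite_sum (cover_mass f0 f1 i c) r /\ r < b n + e n).
  assert (Ex : forall n, exists c, Pn n c).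
  { intros n. destruct (Pm_approx f0 f1 i (A n) (e n) (He n)) as [r [[c [Hc Hs]] Hr]].
    exists c; split; auto. exists r; split; auto. specialize (Hb n); lra. }
  set (C := fun n => epsilon (inhabits (fun _ : nat => @None (Seq * nat)%type)) (Pn n)).
  assert (HC : forall n, Pn n (C n)). { intros n; unfold C; apply epsilon_spec; auto. }
  set (K := (fun k => C (fst (of_nat k)) (snd (of_nat k))) : Cover).
  set (h := fun p : (nat * nat)%type => cover_mass f0 f1 i (C (fst p)) (snd p)).
  assert (hpos : forall p, 0 <= h p) by (intros; unfold h; apply cover_mass_nonneg).
  assert (Hsum : forall N, sum_f_R0 (cover_mass f0 f1 i K) N <= B + d).
  { intros N. rewrite sum_lsum.
    replace (lsum (cover_mass f0 f1 i K) (seq 0 (S N))) with (lsum h (map of_nat (seq 0 (S N)))).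
    2:{ rewrite lsum_map; reflexivity. }
    eapply Rle_trans.
    apply (lsum_sub pair_dec h _ (flat_map (fun x => map (pair x) (seq 0 (S N))) (seq 0 (S N))) hpos).
    - apply NoDup_map_NoDup_ForallPairs; [|apply seq_NoDup]. intros x y _ _ E.
      rewrite <- (cancel_to_of x), <- (cancel_to_of y), E; auto.
    - intros p Hp. apply in_map_iff in Hp. destruct Hp as [k [<- Hk]]. apply in_seq in Hk.
      pose proof (of_nat_bound k). apply in_flat_map. exists (fst (of_nat k)); split.
      apply in_seq; lia. apply in_map_iff. exists (snd (of_nat k)); split.
      rewrite <- surjective_pairing; auto. apply in_seq; lia.
    - rewrite lsum_flat_map.
      apply Rle_trans with (lsum (fun n => b n + e n) (seq 0 (S N))).
      + apply lsum_le. intros n _. rewrite lsum_map. simpl.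
        destruct (HC n) as [_ [r [Hr1 Hr2]]].
        pose proof (partial_le _ r N (fun m => cover_mass_nonneg f0 f1 i (C n) m) Hr1).
        rewrite sum_lsum in H. apply Rle_trans with r; [exact H|lra].
      + rewrite lsum_plus, <- !sum_lsum. pose proof (HB N).
        unfold e; rewrite geom_sum. pose proof (pow_lt (/2) (S N)). 
        assert (0 < d * (/2) ^ S N) by (apply Rmult_lt_0_compat; auto; apply H0; lra). lra. }
  destruct (mono_bound _ _ (cover_mass_nonneg f0 f1 i K) Hsum) as [r [Hr1 Hr2]].
  eapply Rle_trans; [|apply Hr2]. apply Pm_le_cover. exists K; split; auto.
  intros w [n Hn]. destruct (HC n) as [Hc _]. destruct (Hc w Hn) as [m Hm].
  exists (to_nat (n, m)). unfold cover_piece, K. rewrite cancel_of_to. simpl. exact Hm.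
Qed.

Lemma Pm_sub2 f0 f1 i (A B : Seq -> Prop) :
  Pm f0 f1 i (fun w => A w \/ B w) <= Pm f0 f1 i A + Pm f0 f1 i B.
Proof.
  set (F := fun n => match n with O => A | 1%nat => B | _ => fun _ : Seq => False end).
  eapply Rle_trans. apply Pm_mono with (B := fun w => exists n, F n w).
  { intros w [H|H]; [exists 0%nat|exists 1%nat]; auto. }
  apply Pm_csub with (b := fun n => match n with O => Pm f0 f1 i A | 1%nat => Pm f0 f1 i B | _ => 0 end).
  - intros [|[|n]]; simpl; try lra. rewrite Pm_empty; [lra|tauto].
  - pose proof (Pm_nonneg f0 f1 i B). intros N; induction N.
    + simpl; lra.
    + change (sum_f_R0 ?a (S N)) with (sum_f_R0 a N + a (S N)).
      destruct N; simpl in *; lra.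
Qed.

Definition ms f0 f1 j (u : list bool) : R := cylmass f0 f1 j (sol u) (length u).
Definition Fdist f0 f1 j (u : list bool) : Dist := strat j f0 f1 (hist f0 f1 (sol u) (length u)).

Lemma ms_range f0 f1 j u : 0 <= ms f0 f1 j u <= 1.
Proof. apply cylmass_range. Qed.

Lemma sol_app_lt u x k : (k < length u)%nat -> sol (u ++ x) k = sol u k.
Proof. intros H; unfold sol; apply app_nth1; auto. Qed.

Lemma ms_app1 f0 f1 j u b : ms f0 f1 j (u ++ [b]) = ms f0 f1 j u * dprob (Fdist f0 f1 j u) b.
Proof.
  unfold ms, Fdist. rewrite length_app; simpl. rewrite Nat.add_1_r. simpl.
  rewrite (cylmass_ext f0 f1 j (sol (u ++ [b])) (sol u)) by (intros; apply sol_app_lt; auto).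
  f_equal. unfold fprob.
  rewrite (hist_ext f0 f1 (sol (u ++ [b])) (sol u)) by (intros; apply sol_app_lt; auto).
  f_equal. unfold sol. rewrite app_nth2 by lia. rewrite Nat.sub_diag; reflexivity.
Qed.

Lemma ms_split f0 f1 j u : ms f0 f1 j u = ms f0 f1 j (u ++ [false]) + ms f0 f1 j (u ++ [true]).
Proof. rewrite !ms_app1. rewrite <- Rmult_plus_distr_l, dprob_sum; ring. Qed.

Lemma ms_pre f0 f1 j w s : ms f0 f1 j (pre w s) = cylmass f0 f1 j w s.
Proof. unfold ms. rewrite pre_length. apply cylmass_ext. intros; apply pre_nth; auto. Qed.

Definition prefix (u v : list bool) : Prop := exists x, v = u ++ x.
Definition antichain (l : list (list bool)) : Prop :=
  forall u v, In u l -> In v l -> prefix u v -> u = v.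

Fixpoint isprefix (u v : list bool) : bool :=
  match u, v with
  | [], _ => true
  | a :: u', b :: v' => Bool.eqb a b && isprefix u' v'
  | _, _ => false
  end.

Lemma isprefix_spec u v : isprefix u v = true <-> prefix u v.
Proof.
  revert v; induction u as [|a u IH]; intros v; simpl.
  - split; auto. intros; exists v; auto.
  - destruct v as [|b v].
    + split; [discriminate|]. intros [x Hx]; discriminate.
    + rewrite Bool.andb_true_iff, IH, Bool.eqb_true_iff. split.
      * intros [-> [x ->]]; exists x; auto.
      * intros [x Hx]. injection Hx as -> ->. split; auto. exists x; auto.
Qed.

Lemma lsum_filter {X} (g : X -> R) (p : X -> bool) l :
  lsum g l = lsum g (filter p l) + lsum g (filter (fun x => negb (p x)) l).
Proof. induction l; simpl; [ring|]. destruct (p a); simpl; rewrite IHl; ring. Qed.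

Lemma antichain_filter (p : list bool -> bool) l : antichain l -> antichain (filter p l).
Proof. intros H u v Hu Hv. apply filter_In in Hu, Hv. apply H; tauto. Qed.

Lemma nodup_all_eq {X} (l : list X) u : NoDup l -> (forall v, In v l -> v = u) -> l = [] \/ l = [u].
Proof.
  intros N H. destruct l as [|a l]; auto. right.
  assert (a = u) by (apply H; simpl; auto). subst.
  destruct l as [|b l]; auto. assert (b = u) by (apply H; simpl; auto). subst.
  inversion N; subst. exfalso; apply H2; simpl; auto.
Qed.

Lemma AC f0 f1 j d : forall u l, NoDup l -> antichain l ->
  (forall v, In v l -> exists x, v = u ++ x /\ (length x <= d)%nat) ->
  lsum (ms f0 f1 j) l <= ms f0 f1 j u.
Proof.
  induction d as [|d IH]; intros u l N A H.
  - assert (l = [] \/ l = [u]) as [->| ->].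
    { apply nodup_all_eq; auto. intros v Hv. destruct (H v Hv) as [x [-> Hx]].
      destruct x; simpl in Hx; [rewrite app_nil_r; auto|lia]. }
    simpl; pose proof (ms_range f0 f1 j u); lra. simpl; lra.
  - destruct (in_dec (list_eq_dec Bool.bool_dec) u l) as [I|NI].
    + assert (l = [] \/ l = [u]) as [->| ->].
      { apply nodup_all_eq; auto. intros v Hv. symmetry. apply A; auto.
        destruct (H v Hv) as [x [E _]]. exists x; exact E. }
      simpl; pose proof (ms_range f0 f1 j u); lra. simpl; lra.
    + set (p := fun v : list bool => nth (length u) v false).
      rewrite (lsum_filter _ p l), (ms_split f0 f1 j u), (Rplus_comm (ms f0 f1 j (u ++ [false]))).
      apply Rplus_le_compat.
      * apply IH. apply NoDup_filter; auto. apply antichain_filter; auto.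
        intros v Hv. apply filter_In in Hv as [Hv Pv]. destruct (H v Hv) as [x [-> Hx]].
        destruct x as [|b x]. { rewrite app_nil_r in Hv; tauto. }
        unfold p in Pv. rewrite app_nth2, Nat.sub_diag in Pv by lia. simpl in Pv. subst b.
        exists x; split; [rewrite <- app_assoc; auto|simpl in Hx; lia].
      * apply IH. apply NoDup_filter; auto. apply antichain_filter; auto.
        intros v Hv. apply filter_In in Hv as [Hv Pv]. destruct (H v Hv) as [x [-> Hx]].
        destruct x as [|b x]. { rewrite app_nil_r in Hv; tauto. }
        unfold p in Pv. rewrite app_nth2, Nat.sub_diag in Pv by lia. simpl in Pv.
        destruct b; [discriminate|].
        exists x; split; [rewrite <- app_assoc; auto|simpl in Hx; lia].
Qed.

Lemma in_list_max x l : In x l -> (x <= list_max l)%nat.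
Proof.
  intros H. pose proof (proj1 (list_max_le l (list_max l)) (Nat.le_refl _)).
  rewrite Forall_forall in H0. auto.
Qed.

Lemma AC_root f0 f1 j l : NoDup l -> antichain l -> lsum (ms f0 f1 j) l <= 1.
Proof.
  intros N A. replace 1 with (ms f0 f1 j []) by reflexivity.
  apply (AC f0 f1 j (list_max (map (@length bool) l))); auto.
  intros v Hv; exists v; split; auto. apply in_list_max. apply in_map; auto.
Qed.

Lemma TL f0 f1 j S : forall l, NoDup l -> antichain l ->
  (forall w, In w l -> exists u, In u S /\ prefix u w) ->
  lsum (ms f0 f1 j) l <= lsum (ms f0 f1 j) S.
Proof.
  induction S as [|u S IH]; intros l N A H.
  - destruct l as [|w l]; [simpl; lra|]. destruct (H w (or_introl eq_refl)) as [u [[] _]].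
  - rewrite (lsum_filter _ (isprefix u) l). simpl. apply Rplus_le_compat.
    + apply (AC f0 f1 j (list_max (map (@length bool) l))).
      apply NoDup_filter; auto. apply antichain_filter; auto.
      intros v Hv. apply filter_In in Hv as [Hv Pv]. apply isprefix_spec in Pv as [x ->].
      exists x; split; auto. assert (length x <= length (u ++ x))%nat by (rewrite length_app; lia).
      eapply Nat.le_trans; [apply H0|]. apply in_list_max. apply in_map; auto.
    + apply IH. apply NoDup_filter; auto. apply antichain_filter; auto.
      intros v Hv. apply filter_In in Hv as [Hv Pv]. destruct (H v Hv) as [u' [[E|I] Hp]].
      * subst. apply isprefix_spec in Hp. rewrite Hp in Pv; discriminate.
      * exists u'; auto.
Qed.

Lemma PmS f0 f1 j (P : list bool -> Prop) B :
  (forall l, NoDup l -> (forall u, In u l -> P u) -> lsum (ms f0 f1 j) l <= B) ->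
  Pm f0 f1 j (fun w => exists s, P (pre w s)) <= B.
Proof.
  intros HB.
  set (c := (fun k => if excluded_middle_informative (P (str k))
                      then Some (sol (str k), length (str k)) else None) : Cover).
  assert (Hm : forall k, cover_mass f0 f1 j c k =
                 if excluded_middle_informative (P (str k)) then ms f0 f1 j (str k) else 0).
  { intros k; unfold cover_mass, c. destruct (excluded_middle_informative _); reflexivity. }
  assert (Hl : forall N, exists l, NoDup l /\ (forall u, In u l -> P u /\ exists k, (k <= N)%nat /\ u = str k)
                  /\ sum_f_R0 (cover_mass f0 f1 j c) N = lsum (ms f0 f1 j) l).
  { induction N.
    - simpl. rewrite Hm. destruct (excluded_middle_informative (P (str 0))).
      + exists [str 0%nat]; split; [constructor; [simpl; auto|constructor]|split].
        intros u [<-|[]]; split; auto; exists 0%nat; auto. simpl; ring.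
      + exists []; split; [constructor|split]; [simpl; tauto|reflexivity].
    - destruct IHN as [l [N1 [N2 N3]]]. simpl. rewrite Hm, N3.
      destruct (excluded_middle_informative (P (str (S N)))).
      + exists (str (S N) :: l); split; [|split].
        * constructor; auto. intros I. destruct (N2 _ I) as [_ [k [Hk E]]].
          apply str_inj in E; lia.
        * intros u [<-|I]; [split; auto; exists (S N); auto|].
          destruct (N2 u I) as [Pu [k [Hk E]]]; split; auto; exists k; split; auto.
        * simpl; ring.
      + exists l; split; [auto|split]; [|ring].
        intros u I; destruct (N2 u I) as [Pu [k [Hk E]]]; split; auto; exists k; split; auto. }
  assert (Hs : forall N, sum_f_R0 (cover_mass f0 f1 j c) N <= B).
  { intros N; destruct (Hl N) as [l [N1 [N2 N3]]]. rewrite N3. apply HB; auto. intros; apply N2; auto. }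
  destruct (mono_bound _ _ (cover_mass_nonneg f0 f1 j c) Hs) as [r [Hr1 Hr2]].
  eapply Rle_trans; [|apply Hr2]. apply Pm_le_cover. exists c; split; auto.
  intros w [s Hs']. destruct (str_surj (pre w s)) as [k Hk]. exists k.
  unfold cover_piece, c. destruct (excluded_middle_informative (P (str k))) as [_|n];
  [|rewrite Hk in n; tauto]. rewrite Hk, pre_length. intros m Hm'. rewrite pre_nth; auto.
Qed.

(* ---------- comparison of outer measures via piece replacement ---------- *)
Definition omass f0 f1 i (o : option (Seq * nat)%type) : R :=
  match o with None => 0 | Some (v, t) => cylmass f0 f1 i v t end.

Lemma CMP2 g0 g1 gi f0 f1 fi (X : Seq -> Prop) K : 0 <= K ->
  (forall v t, (exists w, X w /\ cyl v t w) -> exists v' t',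
     (forall w, X w -> cyl v t w -> cyl v' t' w) /\
     cylmass g0 g1 gi v' t' <= K * cylmass f0 f1 fi v t) ->
  Pm g0 g1 gi X <= K * Pm f0 f1 fi X.
Proof.
  intros HK H.
  assert (Hr : forall r, cover_value f0 f1 fi X r -> Pm g0 g1 gi X <= K * r).
  { intros r [c [Hc Hs]].
    set (Q := fun n (o : option (Seq * nat)%type) =>
      (forall w, X w -> cover_piece c n w -> match o with Some (v', t') => cyl v' t' w | None => False end)
      /\ omass g0 g1 gi o <= K * cover_mass f0 f1 fi c n).
    assert (EQ : forall n, exists o, Q n o).
    { intros n. unfold Q, cover_piece, cover_mass. destruct (c n) as [[v t]|].
      - destruct (classic (exists w, X w /\ cyl v t w)) as [E|E].
        + destruct (H v t E) as [v' [t' [H1 H2]]]. exists (Some (v', t')); split; auto.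
        + exists None; split. intros w Xw Cw; apply E; eauto. simpl.
          pose proof (cylmass_range f0 f1 fi v t). apply Rmult_le_pos; lra.
      - exists None; split; [tauto|simpl; lra]. }
    set (c' := (fun n => epsilon (inhabits None) (Q n)) : Cover).
    assert (HQ : forall n, Q n (c' n)) by (intros; apply epsilon_spec; auto).
    assert (Hs' : forall N, sum_f_R0 (cover_mass g0 g1 gi c') N <= K * r).
    { intros N. eapply Rle_trans with (K * sum_f_R0 (cover_mass f0 f1 fi c) N).
      - rewrite !sum_lsum, <- lsum_scal. apply lsum_le. intros n _.
        destruct (HQ n) as [_ Hm]. unfold cover_mass at 1. exact Hm.
      - apply Rmult_le_compat_l; auto. apply partial_le; auto. intros; apply cover_mass_nonneg. }
    destruct (mono_bound _ _ (cover_mass_nonneg g0 g1 gi c') Hs') as [r' [Hr1 Hr2]].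
    eapply Rle_trans; [|apply Hr2]. apply Pm_le_cover. exists c'; split; auto.
    intros w Xw. destruct (Hc w Xw) as [n Hn]. exists n. destruct (HQ n) as [Hq _].
    specialize (Hq w Xw Hn). unfold cover_piece. destruct (c' n) as [[v' t']|]; auto. }
  destruct (Req_dec K 0) as [K0|K0].
  - destruct (cover_value_exists f0 f1 fi X) as [r H0]. specialize (Hr r H0). rewrite K0 in *. lra.
  - apply Rnot_lt_le; intros Hlt.
    set (e := (Pm g0 g1 gi X - K * Pm f0 f1 fi X) / (2 * K)).
    assert (He : e > 0). { unfold e; apply Rdiv_lt_0_compat; lra. }
    destruct (Pm_approx f0 f1 fi X e He) as [r [Hr1 Hr2]]. specialize (Hr r Hr1).
    assert (K * r < K * (Pm f0 f1 fi X + e)) by (apply Rmult_lt_compat_l; lra).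
    unfold e in H0. field_simplify in H0; [|lra]. lra.
Qed.

Definition clamp (x : R) : R := Rmax 0 (Rmin 1 x).
Lemma clamp_range x : 0 <= clamp x <= 1.
Proof. unfold clamp, Rmax, Rmin. repeat destruct Rle_dec; lra. Qed.
Lemma clamp_id x : 0 <= x <= 1 -> clamp x = x.
Proof. intros H; unfold clamp, Rmax, Rmin. repeat destruct Rle_dec; lra. Qed.
Definition mkdist (x : R) : Dist := exist _ (clamp x) (clamp_range x).

Definition outs (h : list Entry) : Seq := fun k => nth k (map (fun e => fst (fst e)) h) false.

Lemma pow_le1 x n : 0 <= x <= 1 -> x ^ n <= 1.
Proof.
  intros H; induction n; simpl; [lra|]. replace 1 with (1*1) by ring.
  apply Rmult_le_compat; try lra. apply pow_le; lra.
Qed.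

Section Hat.
Variables (f0 f1 : Strategy) (j : bool) (v : Seq) (t : nat) (q : R).

Definition dd (i : bool) (k : nat) : Dist :=
  if Bool.eqb i j then mkdist (if v k then q else 1 - q) else mkdist (/2).

Definition hatS (i : bool) : Strategy := fun h =>
  if (length h <? t)%nat then dd i (length h)
  else strat i f0 f1 (hist f0 f1 (outs h) (length h)).

Definition h0 := hatS false.
Definition h1 := hatS true.

Lemma hist_outs g0 g1 w n : map (fun e => fst (fst e)) (hist g0 g1 w n) = pre w n.
Proof.
  induction n; simpl; auto. rewrite map_app. simpl. unfold pre in *. rewrite (seq_S n 0), map_app. simpl.
  f_equal. exact IHn.
Qed.

Lemma strat_hat i w n : strat i h0 h1 (hist h0 h1 w n) =
  if (n <? t)%nat then dd i n else strat i f0 f1 (hist f0 f1 w n).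
Proof.
  assert (E : strat i h0 h1 (hist h0 h1 w n) = hatS i (hist h0 h1 w n)) by (destruct i; reflexivity).
  rewrite E; unfold hatS. rewrite hist_length.
  destruct (n <? t)%nat; auto. f_equal. apply hist_ext. intros k Hk.
  unfold outs. cbv beta. rewrite hist_outs. apply pre_nth; auto.
Qed.

Lemma fprob_hat i w n : fprob h0 h1 i w n =
  if (n <? t)%nat then dprob (dd i n) (w n) else fprob f0 f1 i w n.
Proof. unfold fprob. rewrite strat_hat. destruct (n <? t)%nat; auto. Qed.

Lemma path_hat w n : (t <= n)%nat -> path h0 h1 w n = path f0 f1 w n.
Proof.
  intros H. unfold path.
  pose proof (strat_hat false w n) as E0. pose proof (strat_hat true w n) as E1. simpl in E0, E1.
  assert ((n <? t)%nat = false) as F by (apply Nat.ltb_ge; auto). rewrite F in E0, E1.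
  rewrite E0, E1. reflexivity.
Qed.

Hypothesis Hq : 0 < q < 1.

Lemma dd_pos i k b : (Bool.eqb i j = true -> b = v k) -> dprob (dd i k) b > 0.
Proof.
  intros H. unfold dd. destruct (Bool.eqb i j).
  - rewrite (H eq_refl). destruct (v k); simpl; rewrite clamp_id; lra.
  - destruct b; simpl; rewrite clamp_id; lra.
Qed.

Lemma dd_j k : dprob (dd j k) (v k) = q.
Proof. unfold dd. rewrite Bool.eqb_reflx. destruct (v k); simpl; rewrite clamp_id; lra. Qed.

Lemma hat_mass_short u s : (s <= t)%nat -> (forall k, (k < s)%nat -> u k = v k) ->
  cylmass h0 h1 j u s = q ^ s.
Proof.
  induction s; intros Hs Hu; simpl; auto.
  rewrite IHs by (auto; lia). rewrite fprob_hat.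
  assert ((s <? t)%nat = true) as F by (apply Nat.ltb_lt; lia). rewrite F, Hu, dd_j by lia. ring.
Qed.

Lemma hat_mass_long u s : (t <= s)%nat -> (forall k, (k < t)%nat -> u k = v k) ->
  cylmass f0 f1 j u s * q ^ t = cylmass f0 f1 j v t * cylmass h0 h1 j u s.
Proof.
  intros Hs Hu. induction Hs.
  - rewrite hat_mass_short by auto. rewrite (cylmass_ext f0 f1 j u v) by auto. ring.
  - simpl. rewrite fprob_hat. assert ((m <? t)%nat = false) as F by (apply Nat.ltb_ge; lia).
    rewrite F. rewrite <- Rmult_assoc, <- IHHs. ring.
Qed.

Lemma hat_scale (B : Seq -> Prop) : (forall w, B w -> cyl v t w) -> cylmass f0 f1 j v t > 0 ->
  Pm f0 f1 j B <= (cylmass f0 f1 j v t / q ^ t) * Pm h0 h1 j B.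
Proof.
  intros HB Hc. assert (Hqt : q ^ t > 0) by (apply pow_lt; lra).
  apply CMP2. { unfold Rdiv; apply Rmult_le_pos; [lra|left; apply Rinv_0_lt_compat; lra]. }
  intros u s [w [Bw Cw]]. pose proof (HB w Bw) as Cv.
  assert (Hu : forall k, (k < s)%nat -> (k < t)%nat -> u k = v k).
  { intros k H1 H2. rewrite <- (Cw k H1). apply Cv; auto. }
  destruct (Nat.le_gt_cases t s) as [Hts|Hts].
  - exists u, s; split; auto.
    pose proof (hat_mass_long u s Hts (fun k Hk => Hu k ltac:(lia) Hk)).
    apply Req_le. field_simplify_eq; [|lra]. lra.
  - exists v, t; split. { intros; apply HB; auto. }
    rewrite hat_mass_short by (try lia; intros; apply Hu; lia).
    unfold Rdiv. rewrite Rmult_assoc. rewrite <- (Rmult_1_r (cylmass f0 f1 j v t)) at 1.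
    apply Rmult_le_compat_l; [lra|].
    apply Rmult_le_reg_l with (q ^ t); auto. rewrite <- Rmult_assoc, Rinv_r by lra.
    rewrite Rmult_1_l, Rmult_1_r.
    replace s with (s + 0)%nat by lia. replace t with (s + (t - s))%nat by lia.
    rewrite pow_add, Nat.add_0_r.
    apply Rle_trans with (q ^ s * 1); [|lra].
    apply Rmult_le_compat_l; [apply pow_le; lra|apply pow_le1; lra].
Qed.
End Hat.

Lemma density f0 f1 j (X : Seq -> Prop) th : Pm f0 f1 j X > 0 -> 0 < th < 1 ->
  exists v t, Pm f0 f1 j (fun w => X w /\ cyl v t w) > th * cylmass f0 f1 j v t.
Proof.
  intros HX Hth. apply NNPP; intros N.
  assert (Hall : forall v t, Pm f0 f1 j (fun w => X w /\ cyl v t w) <= th * cylmass f0 f1 j v t).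
  { intros v t. apply Rnot_lt_le. intros H; apply N; exists v, t; auto. }
  set (P := Pm f0 f1 j X) in *.
  destruct (Pm_approx f0 f1 j X (P / th - P)) as [r [[c [Hc Hs]] Hr]].
  { assert (P / th > P). { apply Rmult_lt_reg_l with th; [lra|]. field_simplify; nra. } lra. }
  set (A := fun n w => X w /\ cover_piece c n w).
  assert (H1 : Pm f0 f1 j (fun w => exists n, A n w) <= th * r).
  { apply Pm_csub with (b := fun n => th * cover_mass f0 f1 j c n).
    - intros n. unfold A, cover_piece, cover_mass. destruct (c n) as [[v t]|].
      + apply Hall.
      + rewrite Pm_empty; [lra|tauto].
    - intros N0. rewrite sum_lsum, lsum_scal, <- sum_lsum. apply Rmult_le_compat_l; [lra|].
      apply partial_le; auto. intros; apply cover_mass_nonneg. }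
  assert (H2 : P <= Pm f0 f1 j (fun w => exists n, A n w)).
  { apply Pm_mono. intros w Xw. destruct (Hc w Xw) as [n Hn]. exists n; split; auto. }
  fold P in Hr. assert (th * r < P). { replace P with (th * (P / th)) by (field; lra). apply Rmult_lt_compat_l; lra. }
  lra.
Qed.

Lemma bernoulli x n : 0 <= x <= 1 -> 1 - INR n * x <= (1 - x) ^ n.
Proof.
  intros H; induction n; [simpl; lra|]. rewrite S_INR. change ((1 - x) ^ S n) with ((1 - x) * (1 - x) ^ n).
  assert (0 <= 1 - x) by lra. pose proof (pos_INR n).
  apply Rle_trans with ((1 - x) * (1 - INR n * x)). nra.
  apply Rmult_le_compat_l; auto.
Qed.

Lemma manip (T : Test) f0 f1 j (X : Seq -> Prop) eps : tail_test T -> 0 < eps < 1 ->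
  (forall w, X w -> T w f0 f1 = vof (negb j)) ->
  (forall w, X w -> forall k, fprob f0 f1 (negb j) w k > 0) ->
  Pm f0 f1 j X > 0 ->
  exists g0 g1 : Strategy, Pm g0 g1 j (fun w => T w g0 g1 = vof (negb j)) > 1 - eps.
Proof.
  intros Htail Heps HT Hpos HX.
  set (th := 1 - eps / 2).
  destruct (density f0 f1 j X th HX ltac:(unfold th; lra)) as [v [t Hd]].
  set (B := fun w => X w /\ cyl v t w) in *.
  assert (Hcj : cylmass f0 f1 j v t > 0).
  { pose proof (Pm_cyl f0 f1 j B v t (fun w Hw => proj2 Hw)). pose proof (cylmass_range f0 f1 j v t).
    destruct (Req_dec (cylmass f0 f1 j v t) 0) as [E|E]; [rewrite E in *|]; unfold th in *; nra. }
  destruct (Pm_pos_ex f0 f1 j B ltac:(pose proof (cylmass_range f0 f1 j v t); unfold th in *; nra)) as [w0 [Xw0 Cw0]].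
  assert (Hc : forall i, cylmass f0 f1 i v t > 0).
  { intros i. destruct (Bool.bool_dec i j) as [->|Ne]; auto.
    assert (i = negb j) as -> by (destruct i, j; simpl; congruence).
    rewrite (cylmass_ext f0 f1 (negb j) v w0) by (intros; symmetry; apply Cw0; auto).
    apply cylmass_pos_of. intros; apply Hpos; auto. }
  assert (HB1 : Pm f0 f1 j B > th * cylmass f0 f1 j v t) by exact Hd.
  destruct t as [|t].
  - exists f0, f1. eapply Rlt_le_trans; [|apply (Pm_mono _ _ _ B)].
    + simpl in HB1. unfold th in HB1; lra.
    + intros w [Xw _]; auto.
  - set (rho := (1 - eps) / th).
    assert (Hrho : 0 < rho < 1).
    { unfold rho, th; split. apply Rdiv_lt_0_compat; lra.
      apply Rmult_lt_reg_r with (1 - eps/2); [lra|]. field_simplify; lra. }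
    set (x := (1 - rho) / INR (S t)).
    assert (HSt : INR (S t) >= 1). { rewrite S_INR; pose proof (pos_INR t); lra. }
    assert (Hx : 0 < x <= 1 - rho).
    { unfold x; split. apply Rdiv_lt_0_compat; lra.
      apply Rmult_le_reg_r with (INR (S t)); [lra|]. field_simplify; nra. }
    set (q := 1 - x).
    assert (Hq : 0 < q < 1) by (unfold q; lra).
    assert (Hqt : q ^ S t >= rho).
    { pose proof (bernoulli x (S t) ltac:(lra)). unfold q.
      replace (INR (S t) * x) with (1 - rho) in H by (unfold x; field; lra). lra. }
    exists (h0 f0 f1 j v (S t) q), (h1 f0 f1 j v (S t) q).
    assert (Htl : forall w, B w -> T w (h0 f0 f1 j v (S t) q) (h1 f0 f1 j v (S t) q) = vof (negb j)).
    { intros w [Xw Cw]. rewrite <- (HT w Xw). symmetry. apply Htail.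
      exists (S (S t)). split; [lia|split].
      - intros k Hk. symmetry. apply path_hat. lia.
      - intros k i Hk. split.
        + apply (cylmass_pos_fprob f0 f1 i w (S t)); [|lia].
          rewrite (cylmass_ext f0 f1 i w v) by (intros; apply Cw; auto). apply Hc.
        + rewrite fprob_hat. assert ((k <? S t)%nat = true) as F by (apply Nat.ltb_lt; lia).
          rewrite F. apply dd_pos; [lra|]. intros _. apply Cw; lia. }
    pose proof (hat_scale f0 f1 j v (S t) q Hq B (fun w Hw => proj2 Hw) (Hc j)) as Hs.
    assert (Hm : Pm (h0 f0 f1 j v (S t) q) (h1 f0 f1 j v (S t) q) j B <=
                 Pm (h0 f0 f1 j v (S t) q) (h1 f0 f1 j v (S t) q) j
                    (fun w => T w (h0 f0 f1 j v (S t) q) (h1 f0 f1 j v (S t) q) = vof (negb j))).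
    { apply Pm_mono; auto. }
    set (P1 := Pm (h0 f0 f1 j v (S t) q) (h1 f0 f1 j v (S t) q) j B) in *.
    set (c := cylmass f0 f1 j v (S t)) in *.
    assert (Hqp : q ^ S t > 0) by (apply pow_lt; lra).
    assert (th * c < c / q ^ S t * P1) by lra.
    assert (th * q ^ S t < P1).
    { apply Rmult_lt_reg_l with (c / q ^ S t). apply Rdiv_lt_0_compat; lra.
      replace (c / q ^ S t * (th * q ^ S t)) with (th * c) by (field; lra). lra. }
    assert (th * rho <= th * q ^ S t) by (apply Rmult_le_compat_l; unfold th; lra).
    assert (th * rho = 1 - eps) by (unfold rho; field; unfold th; lra).
    lra.
Qed.

Lemma meas_empty : measurable (fun _ => False).
Proof.
  apply (meas_ext (fun w => ~ cyl (fun _ => false) 0 w)). apply meas_compl, meas_cyl.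
  intros w; split; [|tauto]. intros H; apply H; intros k Hk; lia.
Qed.

Lemma meas_or (A B : Seq -> Prop) : measurable A -> measurable B -> measurable (fun w => A w \/ B w).
Proof.
  intros HA HB.
  apply (meas_ext (fun w => exists n, (match n with O => A | _ => B end) w)).
  apply meas_union; intros [|n]; auto.
  intros w; split. intros [[|n] H]; auto. intros [H|H]; [exists 0%nat|exists 1%nat]; auto.
Qed.

Lemma meas_not (A : Seq -> Prop) : measurable A -> measurable (fun w => ~ A w).
Proof. apply meas_compl. Qed.

Lemma meas_and (A B : Seq -> Prop) : measurable A -> measurable B -> measurable (fun w => A w /\ B w).
Proof.
  intros HA HB. apply (meas_ext (fun w => ~ (~ A w \/ ~ B w))).
  apply meas_not, meas_or; apply meas_not; auto.
  intros w; tauto.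
Qed.

Lemma meas_ex (A : nat -> Seq -> Prop) : (forall n, measurable (A n)) -> measurable (fun w => exists n, A n w).
Proof. apply meas_union. Qed.

Lemma meas_all (A : nat -> Seq -> Prop) : (forall n, measurable (A n)) -> measurable (fun w => forall n, A n w).
Proof.
  intros H. apply (meas_ext (fun w => ~ exists n, ~ A n w)).
  apply meas_not, meas_ex; intros; apply meas_not; auto.
  intros w; split. intros H1 n; apply NNPP; intros H2; apply H1; eauto.
  intros H1 [n Hn]; auto.
Qed.

Lemma meas_prefix n (X : Seq -> Prop) :
  (forall w w', (forall k, (k < n)%nat -> w k = w' k) -> X w -> X w') -> measurable X.
Proof.
  intros HX.
  apply (meas_ext (fun w => exists k, (fun k w => (X (sol (str k)) /\ length (str k) = n) /\ cyl (sol (str k)) n w) k w)).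
  - apply meas_ex. intros k. destruct (classic (X (sol (str k)) /\ length (str k) = n)) as [E|E].
    + apply (meas_ext (cyl (sol (str k)) n)); [apply meas_cyl|]. intros w; tauto.
    + apply (meas_ext (fun _ => False)); [apply meas_empty|]. intros w; tauto.
  - intros w; split.
    + intros [k [[Xk Lk] Ck]]. apply (HX (sol (str k))); auto. intros m Hm; symmetry; apply Ck; auto.
    + intros Xw. destruct (str_surj (pre w n)) as [k Hk]. exists k. rewrite Hk, pre_length.
      split; [split; auto|]. apply (HX w); auto. intros; symmetry; apply pre_nth; auto.
      intros m Hm; rewrite pre_nth; auto.
Qed.

Definition Pos f0 f1 j (w : Seq) : Prop := forall n, fprob f0 f1 j w n > 0.

Lemma Dt_nonneg f0 f1 j w n : 0 <= Dt f0 f1 j w n.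
Proof.
  induction n; simpl; [lra|]. apply Rmult_le_pos; auto.
  pose proof (fprob_range f0 f1 (negb j) w n). pose proof (fprob_range f0 f1 j w n).
  unfold Rdiv. apply Rmult_le_pos; [lra|].
  destruct (Req_dec (fprob f0 f1 j w n) 0) as [E|E]. rewrite E, Rinv_0; lra.
  left; apply Rinv_0_lt_compat; lra.
Qed.

Lemma Dt_mass f0 f1 j w n : cylmass f0 f1 j w n > 0 ->
  cylmass f0 f1 (negb j) w n = Dt f0 f1 j w n * cylmass f0 f1 j w n.
Proof.
  induction n; intros H; simpl; [ring|].
  assert (P1 : fprob f0 f1 j w n > 0) by (apply (cylmass_pos_fprob f0 f1 j w (S n)); auto).
  assert (P2 : cylmass f0 f1 j w n > 0).
  { simpl in H. pose proof (cylmass_range f0 f1 j w n).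
    destruct (Req_dec (cylmass f0 f1 j w n) 0) as [E|E]; [rewrite E in H; lra|lra]. }
  rewrite IHn by auto. field. lra.
Qed.

Lemma Dzero_iff f0 f1 j w : Dzero f0 f1 j w <->
  Pos f0 f1 j w /\ forall m, exists N, forall n, (n >= N)%nat -> Dt f0 f1 j w n < / INR (S m).
Proof.
  unfold Dzero, Pos. split; intros [H1 H2]; split; auto.
  - intros m. destruct (H2 (/ INR (S m))) as [N HN].
    { apply Rinv_0_lt_compat, lt_0_INR; lia. }
    exists N; intros n Hn. specialize (HN n Hn). unfold Rdist in HN.
    rewrite Rminus_0_r, Rabs_right in HN; auto. apply Rle_ge, Dt_nonneg.
  - intros e He. destruct (archimed_cor1 e He) as [M [HM1 HM2]].
    destruct M as [|m]; [lia|]. destruct (H2 m) as [N HN]. exists N; intros n Hn.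
    unfold Rdist. rewrite Rminus_0_r, Rabs_right by (apply Rle_ge, Dt_nonneg).
    specialize (HN n Hn); lra.
Qed.

Lemma meas_Pos f0 f1 j : measurable (Pos f0 f1 j).
Proof.
  apply meas_all. intros n. apply (meas_prefix (S n)). intros w w' H Hw.
  rewrite <- (fprob_ext f0 f1 j w w') by (intros; apply H; lia). auto.
Qed.

Lemma meas_Dzero f0 f1 j : measurable (Dzero f0 f1 j).
Proof.
  apply (meas_ext (fun w => Pos f0 f1 j w /\ forall m, exists N, forall n, (n >= N)%nat -> Dt f0 f1 j w n < / INR (S m))).
  - apply meas_and; [apply meas_Pos|]. apply meas_all; intros m. apply meas_ex; intros N.
    apply meas_all; intros n. destruct (Compare_dec.le_lt_dec N n) as [Hn|Hn].
    + apply (meas_ext (fun w => Dt f0 f1 j w n < / INR (S m))).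
      * apply (meas_prefix n). intros w w' H Hw. rewrite <- (Dt_ext f0 f1 j w w') by auto. auto.
      * intros w; split; [|intros H; apply H; lia]. intros H _; auto.
    + apply (meas_ext (fun _ => ~ False)). apply meas_not, meas_empty.
      intros w; split; auto. intros _ H; lia.
  - intros w; rewrite Dzero_iff; tauto.
Qed.

Lemma min_exists (P : nat -> Prop) : (exists n, P n) -> exists n, P n /\ forall k, (k < n)%nat -> ~ P k.
Proof.
  intros [n Hn]. induction n as [n IH] using (well_founded_induction Wf_nat.lt_wf).
  destruct (classic (exists k, (k < n)%nat /\ P k)) as [[k [Hk Pk]]|N].
  - apply (IH k Hk Pk).
  - exists n; split; auto. intros k Hk Pk; apply N; eauto.
Qed.

Lemma firstn_pre w s k : (k <= s)%nat -> firstn k (pre w s) = pre w k.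
Proof.
  intros H. unfold pre. replace s with (k + (s - k))%nat by lia.
  rewrite seq_app, map_app. rewrite <- (Nat.add_0_r k) at 1.
  replace (k + 0)%nat with (length (map w (seq 0 k)) + 0)%nat by (rewrite length_map, length_seq; lia).
  rewrite firstn_app_2. simpl. rewrite app_nil_r; auto.
Qed.

Definition minhit (hit : list bool -> Prop) (u : list bool) : Prop :=
  hit u /\ forall k, (k < length u)%nat -> ~ hit (firstn k u).

Lemma minhit_antichain hit l : (forall u, In u l -> minhit hit u) -> antichain l.
Proof.
  intros H u v Hu Hv [x ->]. destruct x as [|b x]; [rewrite app_nil_r; auto|].
  exfalso. destruct (H _ Hv) as [_ Hm]. destruct (H _ Hu) as [Hh _].
  apply (Hm (length u)). rewrite length_app; simpl; lia.
  replace (length u) with (length u + 0)%nat by lia. rewrite firstn_app_2. simpl.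
  rewrite app_nil_r; auto.
Qed.

Lemma minhit_pre hit w : (exists s, hit (pre w s)) -> exists s, minhit hit (pre w s).
Proof.
  intros E. destruct (min_exists (fun s => hit (pre w s)) E) as [s [Hs Hm]].
  exists s; split; auto. intros k Hk. rewrite pre_length in Hk. rewrite firstn_pre by lia. apply Hm; auto.
Qed.

Definition dts f0 f1 j (u : list bool) : R := Dt f0 f1 j (sol u) (length u).

Lemma dts_pre f0 f1 j w s : dts f0 f1 j (pre w s) = Dt f0 f1 j w s.
Proof. unfold dts. rewrite pre_length. apply Dt_ext. intros; apply pre_nth; auto. Qed.

Lemma ms_ratio f0 f1 j u : ms f0 f1 j u > 0 -> ms f0 f1 (negb j) u = dts f0 f1 j u * ms f0 f1 j u.
Proof. intros H. unfold ms, dts. apply Dt_mass; auto. Qed.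

Lemma Dzero_null f0 f1 j : Pm f0 f1 (negb j) (Dzero f0 f1 j) = 0.
Proof.
  apply Rle_antisym; [|apply Pm_nonneg].
  apply Rnot_lt_le; intros Hlt. set (d := Pm f0 f1 (negb j) (Dzero f0 f1 j)) in *.
  set (hit := fun u => ms f0 f1 j u > 0 /\ dts f0 f1 j u < d / 2).
  assert (Pm f0 f1 (negb j) (fun w => exists s, minhit hit (pre w s)) <= d / 2).
  { apply PmS. intros l N Hl.
    apply Rle_trans with (lsum (fun u => d / 2 * ms f0 f1 j u) l).
    - apply lsum_le. intros u Hu. destruct (Hl u Hu) as [[H1 H2] _].
      rewrite ms_ratio by auto. apply Rmult_le_compat_r; lra.
    - rewrite lsum_scal. pose proof (AC_root f0 f1 j l N (minhit_antichain hit l Hl)).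
      pose proof (lsum_nonneg (ms f0 f1 j) l (fun u => proj1 (ms_range f0 f1 j u))). nra. }
  assert (d <= Pm f0 f1 (negb j) (fun w => exists s, minhit hit (pre w s))).
  { apply Pm_mono. intros w [Hp Hc]. apply minhit_pre.
    destruct (Hc (d / 2) ltac:(lra)) as [N HN]. exists N. specialize (HN N (Nat.le_refl _)).
    unfold hit. rewrite ms_pre, dts_pre. split.
    - apply cylmass_pos_of; intros; apply Hp.
    - unfold Rdist in HN. rewrite Rminus_0_r in HN. pose proof (Rle_abs (Dt f0 f1 j w N)); lra. }
  lra.
Qed.

Lemma notPos_null f0 f1 j : Pm f0 f1 j (fun w => ~ Pos f0 f1 j w) = 0.
Proof.
  apply Rle_antisym; [|apply Pm_nonneg].
  apply Rle_trans with (Pm f0 f1 j (fun w => exists s, ms f0 f1 j (pre w s) = 0)).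
  - apply Pm_mono. intros w Hw. unfold Pos in Hw. apply not_all_ex_not in Hw as [n Hn].
    exists (S n). rewrite ms_pre. simpl. pose proof (fprob_range f0 f1 j w n).
    assert (fprob f0 f1 j w n = 0) as -> by lra. ring.
  - apply (PmS f0 f1 j (fun u => ms f0 f1 j u = 0) 0). intros l _ Hl.
    apply Rle_trans with (lsum (fun _ => 0) l).
    + apply lsum_le; intros u Hu; rewrite Hl; auto; lra.
    + clear Hl; induction l; simpl; lra.
Qed.

Lemma abscont f0 f1 i (X : Seq -> Prop) :
  (forall w, X w -> Pos f0 f1 i w /\ ~ Un_cv (Dt f0 f1 i w) 0) ->
  Pm f0 f1 (negb i) X = 0 -> Pm f0 f1 i X = 0.
Proof.
  intros HX H0.
  assert (HA : forall a, a > 0 -> Pm f0 f1 i (fun w => X w /\ forall s, Dt f0 f1 i w s >= a) = 0).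
  { intros a Ha. apply Rle_antisym; [|apply Pm_nonneg].
    eapply Rle_trans. apply (CMP2 f0 f1 i f0 f1 (negb i) _ (/ a)).
    - left; apply Rinv_0_lt_compat; lra.
    - intros v t [w [[Xw Hw] Cw]]. exists v, t; split; auto.
      destruct (HX w Xw) as [Pw _].
      rewrite !(cylmass_ext f0 f1 _ v w) by (intros; symmetry; apply Cw; auto).
      assert (Hc : cylmass f0 f1 i w t > 0) by (apply cylmass_pos_of; intros; apply Pw).
      rewrite (Dt_mass f0 f1 i w t Hc). specialize (Hw t).
      rewrite <- Rmult_assoc. rewrite <- (Rmult_1_l (cylmass f0 f1 i w t)) at 1.
      apply Rmult_le_compat_r; [lra|]. apply Rmult_le_reg_l with a; [lra|].
      rewrite <- Rmult_assoc, Rinv_r by lra. lra.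
    - assert (Pm f0 f1 (negb i) (fun w => X w /\ forall s, Dt f0 f1 i w s >= a) <= Pm f0 f1 (negb i) X)
        by (apply Pm_mono; tauto). pose proof (Pm_nonneg f0 f1 (negb i) (fun w => X w /\ forall s, Dt f0 f1 i w s >= a)).
      rewrite H0 in H. assert (Pm f0 f1 (negb i) (fun w => X w /\ forall s, Dt f0 f1 i w s >= a) = 0) as -> by lra.
      lra. }
  set (hit1 := fun a u => ms f0 f1 i u > 0 /\ dts f0 f1 i u < a).
  set (hit2 := fun a b u => ms f0 f1 i u > 0 /\ dts f0 f1 i u >= b /\
                 exists k, (k < length u)%nat /\ minhit (hit1 a) (firstn k u)).
  assert (HB : forall a b, a > 0 -> b > 0 ->
            Pm f0 f1 i (fun w => exists s, minhit (hit2 a b) (pre w s)) <= a / b).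
  { intros a b Ha Hb. apply PmS. intros l N Hl.
    set (p1 := fun u => epsilon (inhabits (@nil bool)) (fun u1 => prefix u1 u /\ minhit (hit1 a) u1)).
    assert (Hp1 : forall u, In u l -> prefix (p1 u) u /\ minhit (hit1 a) (p1 u)).
    { intros u Hu. unfold p1. apply epsilon_spec. destruct (Hl u Hu) as [[_ [_ [k [_ Hk]]]] _].
      exists (firstn k u); split; auto. exists (skipn k u). symmetry; apply firstn_skipn. }
    set (S1 := nodup (list_eq_dec Bool.bool_dec) (map p1 l)).
    assert (HS1 : forall u1, In u1 S1 -> minhit (hit1 a) u1).
    { intros u1 Hu1. unfold S1 in Hu1. rewrite nodup_In, in_map_iff in Hu1.
      destruct Hu1 as [u [<- Hu]]. apply Hp1; auto. }
    apply Rle_trans with (lsum (fun u => / b * ms f0 f1 (negb i) u) l).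
    { apply lsum_le. intros u Hu. destruct (Hl u Hu) as [[Hm [Hd _]] _].
      rewrite ms_ratio by auto. rewrite <- Rmult_assoc. rewrite <- (Rmult_1_l (ms f0 f1 i u)) at 1.
      apply Rmult_le_compat_r; [lra|]. apply Rmult_le_reg_l with b; [lra|].
      rewrite <- Rmult_assoc, Rinv_r by lra. lra. }
    rewrite lsum_scal. unfold Rdiv. rewrite (Rmult_comm a). apply Rmult_le_compat_l; [left; apply Rinv_0_lt_compat; lra|].
    apply Rle_trans with (lsum (ms f0 f1 (negb i)) S1).
    { apply TL; auto. apply (minhit_antichain (hit2 a b)); auto.
      intros w Hw. exists (p1 w); split; [|apply Hp1; auto].
      unfold S1. rewrite nodup_In. apply in_map; auto. }
    apply Rle_trans with (lsum (fun u => a * ms f0 f1 i u) S1).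
    { apply lsum_le. intros u Hu. destruct (HS1 u Hu) as [[Hm Hd] _].
      rewrite ms_ratio by auto. apply Rmult_le_compat_r; lra. }
    rewrite lsum_scal. pose proof (AC_root f0 f1 i S1 (NoDup_nodup _ _) (minhit_antichain _ _ HS1)).
    pose proof (lsum_nonneg (ms f0 f1 i) S1 (fun u => proj1 (ms_range f0 f1 i u))). nra. }
  set (L := fun m w => forall N, exists n, (n >= N)%nat /\ Dt f0 f1 i w n >= / INR (S m)).
  assert (HC : forall m, Pm f0 f1 i (fun w => X w /\ L m w) = 0).
  { intros m. set (b := / INR (S m)).
    assert (Hb : b > 0) by (apply Rinv_0_lt_compat, lt_0_INR; lia).
    set (P := Pm f0 f1 i (fun w => X w /\ L m w)).
    assert (Ha : forall a, a > 0 -> P <= a / b).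
    { intros a Ha. unfold P.
      eapply Rle_trans. apply (Pm_mono _ _ _ _ (fun w => (X w /\ forall s, Dt f0 f1 i w s >= a) \/
                                                       exists s, minhit (hit2 a b) (pre w s))).
      - intros w [Xw Lw]. destruct (classic (forall s, Dt f0 f1 i w s >= a)) as [E|E]; [left; auto|right].
        apply not_all_ex_not in E as [s Hs]. destruct (HX w Xw) as [Pw _].
        destruct (minhit_pre (hit1 a) w) as [s1 Hs1].
        { exists s. split. rewrite ms_pre; apply cylmass_pos_of; intros; apply Pw. rewrite dts_pre; lra. }
        apply minhit_pre. destruct (Lw (S s1)) as [n [Hn Hd]]. exists n. split; [|split].
        + rewrite ms_pre; apply cylmass_pos_of; intros; apply Pw.
        + rewrite dts_pre; auto.
        + exists s1. rewrite pre_length. split; [lia|]. rewrite firstn_pre by lia. auto.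
      - eapply Rle_trans; [apply Pm_sub2|]. rewrite HA by auto. pose proof (HB a b Ha Hb). lra. }
    apply Rle_antisym; [|apply Pm_nonneg]. apply Rnot_lt_le; intros Hlt.
    specialize (Ha (P * b / 2) ltac:(nra)). replace (P * b / 2 / b) with (P / 2) in Ha by (field; lra). lra. }
  apply Rle_antisym; [|apply Pm_nonneg].
  eapply Rle_trans. apply (Pm_mono _ _ _ _ (fun w => exists m, X w /\ L m w)).
  - intros w Xw. destruct (HX w Xw) as [Pw Nc]. apply NNPP; intros Hn. apply Nc.
    assert (Dzero f0 f1 i w) as [_ Hz]; auto. apply Dzero_iff; split; auto.
    intros m. apply NNPP; intros Hm. apply Hn. exists m; split; auto. intros N.
    apply NNPP; intros HN. apply Hm. exists N. intros n Hn'. apply Rnot_ge_lt. intros Hge.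
    apply HN; eauto.
  - apply (Pm_csub _ _ _ _ (fun _ => 0)). intros; rewrite HC; lra. intros; rewrite sum_zero; auto; lra.
Qed.

Lemma Dt_prod f0 f1 w n : Pos f0 f1 true w -> Pos f0 f1 false w ->
  Dt f0 f1 true w n * Dt f0 f1 false w n = 1.
Proof.
  intros P1 P0. induction n; simpl; [ring|].
  specialize (P1 n); specialize (P0 n).
  replace (Dt f0 f1 true w n * (fprob f0 f1 false w n / fprob f0 f1 true w n) *
     (Dt f0 f1 false w n * (fprob f0 f1 true w n / fprob f0 f1 false w n)))
  with (Dt f0 f1 true w n * Dt f0 f1 false w n) by (field; lra). auto.
Qed.

Lemma Dzero_excl f0 f1 w : Dzero f0 f1 true w -> Dzero f0 f1 false w -> False.
Proof.
  intros [P1 C1] [P0 C0].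
  destruct (C1 (/2) ltac:(lra)) as [N1 H1]. destruct (C0 (/2) ltac:(lra)) as [N0 H0].
  specialize (H1 (Nat.max N1 N0) ltac:(lia)). specialize (H0 (Nat.max N1 N0) ltac:(lia)).
  unfold Rdist in *. rewrite Rminus_0_r in *.
  rewrite Rabs_right in H1, H0 by (apply Rle_ge, Dt_nonneg).
  pose proof (Dt_prod f0 f1 w (Nat.max N1 N0) P1 P0).
  pose proof (Dt_nonneg f0 f1 true w (Nat.max N1 N0)). pose proof (Dt_nonneg f0 f1 false w (Nat.max N1 N0)).
  nra.
Qed.

Lemma Dtest_vof f0 f1 i w : Dzero f0 f1 i w -> Dtest w f0 f1 = vof i.
Proof.
  intros H. unfold Dtest. destruct i.
  - destruct (excluded_middle_informative (Dzero f0 f1 true w)); tauto.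
  - destruct (excluded_middle_informative (Dzero f0 f1 true w)) as [E|E].
    + exfalso; apply (Dzero_excl f0 f1 w); auto.
    + destruct (excluded_middle_informative (Dzero f0 f1 false w)); tauto.
Qed.

Lemma Dtest_half f0 f1 w : ~ Dzero f0 f1 true w -> ~ Dzero f0 f1 false w -> Dtest w f0 f1 = Vhalf.
Proof.
  intros H1 H0. unfold Dtest.
  destruct (excluded_middle_informative (Dzero f0 f1 true w)); [tauto|].
  destruct (excluded_middle_informative (Dzero f0 f1 false w)); tauto.
Qed.

Lemma zero_forces f0 f1 i w : Pos f0 f1 i w -> ~ Pos f0 f1 (negb i) w -> Un_cv (Dt f0 f1 i w) 0.
Proof.
  intros P N. unfold Pos in N. apply not_all_ex_not in N as [k Hk].
  assert (Hk0 : fprob f0 f1 (negb i) w k = 0) by (pose proof (fprob_range f0 f1 (negb i) w k); lra).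
  assert (Z : forall n, (n > k)%nat -> Dt f0 f1 i w n = 0).
  { induction n; intros Hn; [lia|]. simpl. destruct (Nat.eq_dec n k) as [->|Ne].
    - rewrite Hk0. unfold Rdiv; ring.
    - rewrite IHn by lia. ring. }
  intros e He. exists (S k). intros n Hn. rewrite Z by lia. unfold Rdist. rewrite Rminus_0_r, Rabs_R0; lra.
Qed.

Lemma vof_neq i : vof i <> vof (negb i).
Proof. destruct i; discriminate. Qed.

Theorem theorem3 (T : Test) :
  test_measurable T -> anonymous T -> non_counterfactual T ->
  reasonable T -> tail_test T ->
  ~ test_equiv T Dtest ->
  forall eps : R, 0 < eps < 1 ->
  exists f0 f1 : Strategy,
    Pm f0 f1 false (fun w => T w f0 f1 = V1) > 1 - eps \/
    Pm f0 f1 true (fun w => T w f0 f1 = V0) > 1 - eps.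
Proof.
  intros Hmeas _ _ Hreas Htail Hne eps Heps.
  assert (Fin : forall f0 f1 j X, (forall w, X w -> T w f0 f1 = vof (negb j)) ->
            (forall w, X w -> Pos f0 f1 (negb j) w) -> Pm f0 f1 j X > 0 ->
            exists g0 g1 : Strategy,
              Pm g0 g1 false (fun w => T w g0 g1 = V1) > 1 - eps \/
              Pm g0 g1 true (fun w => T w g0 g1 = V0) > 1 - eps).
  { intros f0 f1 j X H1 H2 H3. destruct (manip T f0 f1 j X eps Htail Heps H1 H2 H3) as [g0 [g1 Hg]].
    exists g0, g1. destruct j; simpl in Hg; auto. }
  unfold test_equiv in Hne.
  assert (exists f0 f1 i, Pm f0 f1 i (fun w => T w f0 f1 <> Dtest w f0 f1) > 0) as [f0 [f1 [i Hi]]].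
  { apply NNPP; intros N. apply Hne. intros f0 f1 i. apply Rle_antisym; [|apply Pm_nonneg].
    apply Rnot_lt_le; intros Hl; apply N; eauto. }
  set (Z := fun w => Dzero f0 f1 i w /\ ~ T w f0 f1 = vof i).
  set (W := Dzero f0 f1 (negb i)).
  set (N1 := fun w => T w f0 f1 = vof (negb i) /\ Pos f0 f1 (negb i) w).
  set (E := fun w => T w f0 f1 = vof i /\ Pos f0 f1 i w /\ Pos f0 f1 (negb i) w /\ ~ Un_cv (Dt f0 f1 i w) 0).
  assert (Hcov : forall w, T w f0 f1 <> Dtest w f0 f1 ->
            ((~ Pos f0 f1 i w \/ Z w) \/ W w) \/ (N1 w \/ E w)).
  { intros w Hw. destruct (classic (Pos f0 f1 i w)) as [Pw|Pw]; [|tauto].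
    destruct (classic (Dzero f0 f1 i w)) as [Zw|Zw].
    { left; left; right; split; auto. rewrite (Dtest_vof f0 f1 i w Zw) in Hw; auto. }
    destruct (classic (W w)) as [Ww|Ww]; [tauto|].
    assert (Dtest w f0 f1 = Vhalf).
    { apply Dtest_half; destruct i; simpl in *; auto. }
    rewrite H in Hw.
    assert (Nc : ~ Un_cv (Dt f0 f1 i w) 0) by (intros C; apply Zw; split; auto).
    assert (Pn : Pos f0 f1 (negb i) w) by (apply NNPP; intros Pn; apply Nc; apply zero_forces; auto).
    right. destruct (T w f0 f1) eqn:ET; try congruence; destruct i; simpl in *;
      unfold N1, E; rewrite ET; simpl; tauto. }
  assert (HZ : Pm f0 f1 i Z = 0).
  { apply Rle_antisym; [|apply Pm_nonneg]. apply Rnot_lt_le; intros Hlt.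
    assert (MZ : measurable Z).
    { apply meas_and; [apply meas_Dzero|]. apply meas_not. apply Hmeas. }
    assert (Pm f0 f1 (negb i) Z = 0).
    { apply Rle_antisym; [|apply Pm_nonneg]. rewrite <- (Dzero_null f0 f1 i).
      apply Pm_mono. intros w [H _]; auto. }
    pose proof (Hreas f0 f1 i Z MZ Hlt H). rewrite Pm_empty in H0; [lra|].
    intros w [[_ H1] H2]; auto. }
  assert (HW : Pm f0 f1 i W = 0).
  { unfold W. pose proof (Dzero_null f0 f1 (negb i)). rewrite Bool.negb_involutive in H; auto. }
  pose proof (notPos_null f0 f1 i) as HP.
  assert (Hsum : Pm f0 f1 i (fun w => T w f0 f1 <> Dtest w f0 f1) <= Pm f0 f1 i N1 + Pm f0 f1 i E).
  { eapply Rle_trans; [apply (Pm_mono _ _ _ _ _ Hcov)|].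
    eapply Rle_trans; [apply Pm_sub2|].
    assert (Pm f0 f1 i (fun w => (~ Pos f0 f1 i w \/ Z w) \/ W w) <= 0).
    { eapply Rle_trans; [apply Pm_sub2|]. rewrite HW.
      pose proof (Pm_sub2 f0 f1 i (fun w => ~ Pos f0 f1 i w) Z). lra. }
    pose proof (Pm_sub2 f0 f1 i N1 E). lra. }
  destruct (Rlt_or_le 0 (Pm f0 f1 i N1)) as [HN1|HN1].
  - apply (Fin f0 f1 i N1); auto. intros w [H _]; auto. intros w [_ H]; auto.
  - assert (HE : Pm f0 f1 i E > 0) by lra.
    assert (HE' : Pm f0 f1 (negb i) E > 0).
    { destruct (Rle_lt_or_eq_dec 0 (Pm f0 f1 (negb i) E) (Pm_nonneg _ _ _ _)) as [H|H]; auto.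
      rewrite (abscont f0 f1 i E) in HE; [lra| |auto]. intros w [_ [H1 [_ H2]]]; auto. }
    apply (Fin f0 f1 (negb i) E); auto.
    + intros w [H _]. rewrite Bool.negb_involutive; auto.
    + intros w [_ [H _]]. rewrite Bool.negb_involutive; auto.
Qed.
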